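(* Let $(\beta,\gamma)$ be antiferromagnetic and $\lambda>0$. Let $x^*>0$ be the unique positive solution of $x^*=\frac{1+\gamma\lambda(x^* )^2}{\beta+\lambda(x^* )^2}$, let $\omega(R)=\frac{1+\beta\gamma-\beta R-\gamma/R}{1-\beta\gamma}$ and $\omega^*=\omega(x^* )$. For $\tau>0$ let $I'_\tau=\big[x^*-2\tau\frac{|\omega^*|}{1-|\omega^*|},\,x^*+2\tau\frac{|\omega^*|}{1-|\omega^*|}\big]$, and for $R'>0$ let $\phi_{R'}(R)=\frac{1+\gamma\lambda RR'}{\beta+\lambda RR'}$. There exist constants $0<C_{\min}<C_{\max}<1$ and $\tau_0>0$ such that for all $\tau\in(0,\tau_0)$, all $R\in I'_\tau$ and all $R'\in[x^*-\tau,x^*+\tau]$: $$C_{\min}\leq|\phi_{R'}'(R)|\leq C_{\max},\qquad \omega(R)\leq C_{\max},\qquad \phi_{R'}(R)\in I'_\tau,$$ where $\phi_{R'}'$ denotes the derivative with respect to $R$.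
   Context: A pair $(\beta,\gamma)$ with $\beta,\gamma\geq0$ is antiferromagnetic if $\beta\gamma\in[0,1)$ and at least one is nonzero. *)

(* Defs.v *)
From Stdlib Require Import Reals.
From Coquelicot Require Import Coquelicot.
Open Scope R_scope.

Definition antiferromagnetic (beta gamma : R) : Prop :=
  0 <= beta /\ 0 <= gamma /\ beta * gamma < 1 /\ (beta <> 0 \/ gamma <> 0).

Definition omega (beta gamma r : R) : R :=
  (1 + beta * gamma - beta * r - gamma / r) / (1 - beta * gamma).

Definition phi (beta gamma lambda r' r : R) : R :=
  (1 + gamma * lambda * r * r') / (beta + lambda * r * r').

Definition Iprime (xs ws tau r : R) : Prop :=
  xs - 2 * tau * (Rabs ws / (1 - Rabs ws)) <= r <=
  xs + 2 * tau * (Rabs ws / (1 - Rabs ws)).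

(* Main.v *)
Require Import Defs.
From Stdlib Require Import Reals Lra Psatz.
From Coquelicot Require Import Coquelicot.
Open Scope R_scope.

Lemma cont_lt (h : R -> R) (c : R): continuous h 0 -> h 0 < c ->
  exists d, 0 < d /\ forall t, 0 <= t < d -> h t < c.
Proof.
intros H Hc.
assert (E: 0 < c - h 0) by lra.
assert (L: locally (h 0) (fun y => y < c)).
{ exists (mkposreal _ E). intros y Hy. 
  change (Rabs (y - h 0) < c - h 0) in Hy. apply Rabs_def2 in Hy. lra. }
destruct (H _ L) as [d Hd].
exists d. split. apply cond_pos. intros t Ht. apply Hd.
change (Rabs (t - 0) < d). rewrite Rminus_0_r, Rabs_pos_eq; lra.
Qed.

Lemma cont_gt (h : R -> R) (c : R): continuous h 0 -> c < h 0 ->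
  exists d, 0 < d /\ forall t, 0 <= t < d -> c < h t.
Proof.
intros H Hc.
assert (E: 0 < h 0 - c) by lra.
assert (L: locally (h 0) (fun y => c < y)).
{ exists (mkposreal _ E). intros y Hy. 
  change (Rabs (y - h 0) < h 0 - c) in Hy. apply Rabs_def2 in Hy. lra. }
destruct (H _ L) as [d Hd].
exists d. split. apply cond_pos. intros t Ht. apply Hd.
change (Rabs (t - 0) < d). rewrite Rminus_0_r, Rabs_pos_eq; lra.
Qed.

Theorem lemma3p3 (beta gamma lambda xs : R) :
  antiferromagnetic beta gamma -> 0 < lambda ->
  0 < xs -> xs = (1 + gamma * lambda * xs ^ 2) / (beta + lambda * xs ^ 2) ->
  exists Cmin Cmax tau0 : R,
    0 < Cmin /\ Cmin < Cmax /\ Cmax < 1 /\ 0 < tau0 /\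
    forall tau r r' : R,
      0 < tau -> tau < tau0 ->
      Iprime xs (omega beta gamma xs) tau r ->
      xs - tau <= r' <= xs + tau ->
      Cmin <= Rabs (Derive (fun z => phi beta gamma lambda r' z) r) <= Cmax /\
      omega beta gamma r <= Cmax /\
      Iprime xs (omega beta gamma xs) tau (phi beta gamma lambda r' r).
Proof.
intros [Hb [Hg [Hbg Hne]]] Hl Hx Hfix.
assert (Hx2 : 0 < xs^2) by (apply pow_lt; lra).
assert (HD : 0 < beta + lambda * xs ^ 2) by (assert (0 < lambda*xs^2) by (apply Rmult_lt_0_compat; lra); lra).
assert (HxD : xs * (beta + lambda * xs ^ 2) = 1 + gamma * lambda * xs ^ 2).
{ rewrite Hfix at 1. field. apply Rgt_not_eq. exact HD. }
set (D := beta + lambda * xs ^ 2) in *.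
assert (Hxg : xs <> gamma).
{ intro E. subst D. rewrite E in HxD. nra. }
assert (h1 : lambda * xs^2 * (xs - gamma) = 1 - beta * xs).
{ unfold D in HxD. nra. }
assert (h2 : D * (xs - gamma) = 1 - beta * gamma).
{ unfold D. nra. }
set (w := omega beta gamma xs).
assert (Hw1 : w * xs * (1 - beta*gamma) = (1 - beta*xs)*(xs-gamma)).
{ unfold w, omega. field. split; lra. }
assert (E : (1 - beta*xs)*(xs-gamma)*D^2 = lambda*xs^2*(1-beta*gamma)^2).
{ replace ((1 - beta*xs)*(xs-gamma)*D^2) with ((1-beta*xs)*D*(D*(xs-gamma))) by ring.
  rewrite h2, <- h1.
  replace (lambda * xs ^ 2 * (xs - gamma) * D * (1 - beta * gamma)) with
    (lambda*xs^2*(1-beta*gamma)*(D*(xs-gamma))) by ring.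
  rewrite h2; ring. }
assert (Hw2 : w * D^2 = lambda*xs*(1-beta*gamma)).
{ apply Rmult_eq_reg_l with (xs*(1-beta*gamma)).
  2: { apply Rgt_not_eq. apply Rmult_lt_0_compat; lra. }
  replace (xs * (1 - beta * gamma) * (lambda * xs * (1 - beta * gamma))) with
    (lambda*xs^2*(1-beta*gamma)^2) by ring.
  rewrite <- E, <- Hw1. ring. }
assert (HD2 : 0 < D^2) by (apply pow_lt; lra).
assert (Hw0 : 0 < w).
{ destruct (Rle_or_lt w 0) as [H|H]; auto.
  assert (0 < lambda*xs*(1-beta*gamma)) by (apply Rmult_lt_0_compat; nra).
  nra. }
assert (Hq : 0 < beta*xs^2 - 2*beta*gamma*xs + gamma).
{ replace (beta*xs^2 - 2*beta*gamma*xs + gamma) with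
    (beta*(xs-gamma)^2 + gamma*(1-beta*gamma)) by ring.
  assert (0 < (xs-gamma)^2).
  { assert (xs - gamma <> 0) by lra. nra. }
  destruct Hne as [Hn|Hn].
  - assert (0 < beta) by lra. nra.
  - assert (0 < gamma) by lra. nra. }
assert (Hw3 : w < 1).
{ assert (0 < xs*(1-beta*gamma)) by nra.
  assert (w * (xs*(1-beta*gamma)) < 1 * (xs*(1-beta*gamma))).
  { replace (w * (xs*(1-beta*gamma))) with (w * xs * (1 - beta*gamma)) by ring.
    rewrite Hw1. nra. }
  nra. }
assert (Hwe : w = lambda*xs*(1-beta*gamma)/D^2).
{ rewrite <- Hw2. field. lra. }
set (K := 2*w/(1-w)).
assert (HK : K*(1-w) = 2*w) by (unfold K; field; lra).
assert (HK0 : 0 < K) by (unfold K; apply Rdiv_lt_0_compat; lra).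
assert (Haw : Rabs w = w) by (apply Rabs_pos_eq; lra).
assert (HDD : beta + lambda*xs*xs = D) by (unfold D; ring).
assert (HD0 : D <> 0) by lra.
set (lo := fun t => beta + lambda * (xs - K*t) * (xs - t)).
set (hi := fun t => beta + lambda * (xs + K*t) * (xs + t)).
assert (lo0 : lo 0 = D) by (unfold lo, D; ring).
assert (hi0 : hi 0 = D) by (unfold hi, D; ring).
destruct (cont_lt (fun t => (1-beta*gamma)*lambda*(xs+t)/(lo t)^2) ((1+w)/2)) as [d1 [Hd1 H1]].
{ apply (@ex_derive_continuous R_AbsRing R_NormedModule). unfold lo. auto_derive.
  replace (K*0) with 0 by ring. rewrite Ropp_0, !Rplus_0_r, Rmult_1_r, HDD.
  apply Rmult_integral_contrapositive; split; exact HD0. }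
{ cbv beta. rewrite lo0. match goal with |- ?a < _ => replace a with w by (rewrite Hwe; field; exact HD0) end. lra. }
destruct (cont_gt (fun t => (1-beta*gamma)*lambda*(xs-t)/(hi t)^2) (w/2)) as [d2 [Hd2 H2]].
{ apply (@ex_derive_continuous R_AbsRing R_NormedModule). unfold hi. auto_derive.
  replace (K*0) with 0 by ring. rewrite !Rplus_0_r, Rmult_1_r, HDD.
  apply Rmult_integral_contrapositive; split; exact HD0. }
{ cbv beta. rewrite hi0. match goal with |- _ < ?a => replace a with w by (rewrite Hwe; field; exact HD0) end. lra. }
destruct (cont_lt (fun t => (1+beta*gamma-beta*(xs-K*t)-gamma/(xs+K*t))/(1-beta*gamma)) ((1+w)/2)) as [d3 [Hd3 H3]].
{ apply (@ex_derive_continuous R_AbsRing R_NormedModule). auto_derive.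
  replace (K*0) with 0 by ring. rewrite Rplus_0_r. lra. }
{ replace (xs - K*0) with xs by ring. replace (xs + K*0) with xs by ring.
  change (w < (1+w)/2). lra. }
destruct (cont_lt (fun t => (1-beta*gamma)*lambda*(K*(xs+t)+xs)/(lo t * D)) K) as [d4 [Hd4 H4]].
{ apply (@ex_derive_continuous R_AbsRing R_NormedModule). unfold lo. auto_derive.
  replace (K*0) with 0 by ring. rewrite Ropp_0, !Rplus_0_r, HDD.
  apply Rmult_integral_contrapositive; split; exact HD0. }
{ rewrite lo0, Rplus_0_r. 
  replace ((1 - beta * gamma) * lambda * (K * xs + xs) / (D * D)) with
    ((lambda * xs * (1 - beta * gamma) / D ^ 2) * (K+1)) by (field; lra).
  rewrite <- Hwe. nra. }
assert (HK1 : 0 < K + 1) by lra.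
exists (w/2), ((1+w)/2), (Rmin (Rmin d1 d2) (Rmin (Rmin d3 d4) (xs/(K+1)))).
split; [lra|]. split; [lra|]. split; [lra|].
split.
{ repeat apply Rmin_pos; auto. apply Rdiv_lt_0_compat; lra. }
intros tau r r' Ht Ht0 Hr Hr'.
assert (t1 : tau < d1) by (eapply Rlt_le_trans; [exact Ht0|]; eapply Rle_trans; [apply Rmin_l|apply Rmin_l]).
assert (t2 : tau < d2) by (eapply Rlt_le_trans; [exact Ht0|]; eapply Rle_trans; [apply Rmin_l|apply Rmin_r]).
assert (t3 : tau < d3) by (eapply Rlt_le_trans; [exact Ht0|]; eapply Rle_trans; [apply Rmin_r|]; eapply Rle_trans; [apply Rmin_l|apply Rmin_l]).
assert (t4 : tau < d4) by (eapply Rlt_le_trans; [exact Ht0|]; eapply Rle_trans; [apply Rmin_r|]; eapply Rle_trans; [apply Rmin_l|apply Rmin_r]).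
assert (t5 : tau < xs/(K+1)) by (eapply Rlt_le_trans; [exact Ht0|]; eapply Rle_trans; [apply Rmin_r|apply Rmin_r]).
assert (t5' : (K+1)*tau < xs).
{ apply Rmult_lt_compat_l with (r := K+1) in t5; auto.
  replace ((K+1)*(xs/(K+1))) with xs in t5 by (field; lra). exact t5. }
assert (HI : forall y, Iprime xs w tau y <-> xs - K*tau <= y <= xs + K*tau).
{ intro y. unfold Iprime. rewrite Haw.
  replace (2 * tau * (w / (1 - w))) with (K*tau) by (unfold K; field; lra). tauto. }
fold w in Hr |- *. apply HI in Hr.
specialize (H1 tau (conj (Rlt_le _ _ Ht) t1)).
specialize (H2 tau (conj (Rlt_le _ _ Ht) t2)).
specialize (H3 tau (conj (Rlt_le _ _ Ht) t3)).
specialize (H4 tau (conj (Rlt_le _ _ Ht) t4)).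
cbv beta in H1, H2, H3, H4.
assert (Kt : 0 < K*tau) by nra.
assert (Hr0 : 0 < xs - K*tau) by lra.
assert (Hr'0 : 0 < xs - tau) by nra.
assert (P1 : (xs - K*tau)*(xs - tau) <= r*r') by (apply Rmult_le_compat; lra).
assert (P2 : r*r' <= (xs + K*tau)*(xs + tau)) by (apply Rmult_le_compat; lra).
set (V := beta + lambda*r*r').
assert (V1 : lo tau <= V) by (unfold lo, V; nra).
assert (V2 : V <= hi tau) by (unfold hi, V; nra).
assert (lo0' : 0 < lo tau) by (unfold lo; assert (0 < lambda * (xs - K*tau) * (xs - tau)) by (apply Rmult_lt_0_compat; [apply Rmult_lt_0_compat|]; lra); lra).
assert (HV : 0 < V) by lra.
assert (Hc : 0 < (1-beta*gamma)*lambda) by (apply Rmult_lt_0_compat; lra).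
set (c := (1-beta*gamma)*lambda) in *.
assert (Hder : Derive (fun z => phi beta gamma lambda r' z) r = - (c*r'/V^2)).
{ apply is_derive_unique. unfold phi. auto_derive.
  - fold V. lra.
  - fold V. unfold c, V. field. fold V. lra. }
assert (HA : 0 < c*r'/V^2).
{ apply Rdiv_lt_0_compat. apply Rmult_lt_0_compat; lra. apply pow_lt; lra. }
assert (HV2 : 0 < V^2) by (apply pow_lt; lra).
assert (Hlo2 : 0 < (lo tau)^2) by (apply pow_lt; lra).
assert (HAu : c*r'/V^2 <= c*(xs+tau)/(lo tau)^2).
{ unfold Rdiv. apply Rmult_le_compat.
  - apply Rmult_le_pos; lra.
  - apply Rlt_le, Rinv_0_lt_compat; lra.
  - apply Rmult_le_compat_l; lra.
  - apply Rinv_le_contravar; auto. apply pow_incr; lra. }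
assert (HAl : c*(xs-tau)/(hi tau)^2 <= c*r'/V^2).
{ unfold Rdiv. apply Rmult_le_compat.
  - apply Rmult_le_pos; lra.
  - apply Rlt_le, Rinv_0_lt_compat. apply pow_lt; lra.
  - apply Rmult_le_compat_l; lra.
  - apply Rinv_le_contravar; auto. apply pow_incr; lra. }
rewrite Hder, Rabs_Ropp, Rabs_pos_eq by lra.
split; [lra|].
split.
{ eapply Rle_trans; [|apply Rlt_le, H3]. unfold omega. unfold Rdiv.
  apply Rmult_le_compat_r. apply Rlt_le, Rinv_0_lt_compat; lra.
  assert (gamma * / (xs + K*tau) <= gamma * / r).
  { apply Rmult_le_compat_l; auto. apply Rinv_le_contravar; lra. }
  nra. }
apply HI.
assert (Hphi : phi beta gamma lambda r' r * V = 1 + gamma*lambda*r*r').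
{ unfold phi, V. field. fold V. lra. }
assert (Hdiff : (phi beta gamma lambda r' r - xs) * (V*D) = c*(xs^2 - r*r')).
{ replace ((phi beta gamma lambda r' r - xs) * (V*D)) with
    ((phi beta gamma lambda r' r * V)*D - (xs*D)*V) by ring.
  rewrite Hphi, HxD. unfold V, D, c. ring. }
set (B := tau*(K*(xs+tau)+xs)).
assert (EB1 : xs^2 - r*r' <= B) by (unfold B; nra).
assert (EB2 : -B <= xs^2 - r*r') by (unfold B; nra).
assert (H4' : c*B < K*tau*(lo tau * D)).
{ assert (0 < lo tau * D) by (apply Rmult_lt_0_compat; lra).
  apply (Rmult_lt_compat_r (tau * (lo tau * D))) in H4; [|nra].
  unfold B. replace (c * (tau * (K * (xs + tau) + xs))) with
    (c * (K * (xs + tau) + xs) / (lo tau * D) * (tau * (lo tau * D))) by (field; lra).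
  lra. }
assert (LV : K*tau*(lo tau * D) <= K*tau*(V*D)).
{ apply Rmult_le_compat_l; [lra|]. apply Rmult_le_compat_r; lra. }
assert (HVD : 0 < V*D) by (apply Rmult_lt_0_compat; lra).
set (p := phi beta gamma lambda r' r) in *.
split.
- destruct (Rle_or_lt (xs - K*tau) p) as [H|H]; auto.
  assert ((p - xs)*(V*D) < -(K*tau)*(V*D)) by (apply Rmult_lt_compat_r; lra).
  nra.
- destruct (Rle_or_lt p (xs + K*tau)) as [H|H]; auto.
  assert ((K*tau)*(V*D) < (p-xs)*(V*D)) by (apply Rmult_lt_compat_r; lra).
  nra.
Qed.
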